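(* Let $X$ be a set and $\{d_r\colon X\times X\to\mathbb{R}_{\ge0}\cup\{\infty\}\}_{r>0}$ a family satisfying the weaker $\{d_r\}$-axioms (see context). Then there exists a quasi-pseudo-metric $d$ on $X$ such that the quasi-uniformity induced by $d$ equals the quasi-uniformity $\mathcal U$ induced by $\{d_r\}_{r>0}$. Moreover, if $\{d_r\}_{r>0}$ is non-degenerate, i.e. $d_r(x,y)=0$ for all $r>0$ implies $x=y$, then $d$ can be chosen to be a quasi-metric.
   Context: The weaker $\{d_r\}$-axioms, required for all $x,y,z\in X$: (Self-distance) $d_r(x,x)=0$ for all $r>0$. (Upper semi-continuity) if $r_1\le r_2$ then $d_{r_1}(x,y)\le d_{r_2}(x,y)$; and if $d_r(x,y)<\varepsilon$ there is $\delta>0$ with $d_{r+\delta}(x,y)<\varepsilon$. (Weaker triangle inequality) for $r_1,r_2,r_3>0$, if $d_{r_1+r_2+r_3}(x,y)<r_3$ and $d_{r_1+r_2+r_3}(y,z)<r_2$, then $d_{r_1}(x,z)\le d_{r_1+r_2+r_3}(x,y)+d_{r_1+r_2+r_3}(y,z)$. The quasi-uniformity $\mathcal U$ induced by $\{d_r\}$ consists of all $U\subset X\times X$ containing $\{(x,y)\mid d_r(x,y)<\varepsilon\}$ for some $r,\varepsilon>0$. A quasi-pseudo-metric is a function $d\colon X\times X\to\mathbb{R}_{\ge0}$ with $d(x,x)=0$ and $d(x,z)\le d(x,y)+d(y,z)$ for all $x,y,z$ (not necessarily symmetric); it is a quasi-metric if moreover $d(x,y)=0$ implies $x=y$. The quasi-uniformity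 induced by $d$ consists of all $U\subset X\times X$ containing $\{(x,y)\mid d(x,y)<\varepsilon\}$ for some $\varepsilon>0$. *)

(* Defs.v *)
From Stdlib Require Import Reals.
From Coquelicot Require Import Rbar.
Open Scope R_scope.

(* A family {d_r}_{r>0} : X x X -> [0, +oo] is represented as
   dr : R -> X -> X -> Rbar; only values at r > 0 are ever used. *)

Definition dr_nonneg {X : Type} (dr : R -> X -> X -> Rbar) : Prop :=
  forall r x y, 0 < r -> Rbar_le (Finite 0) (dr r x y).

Definition dr_self_distance {X : Type} (dr : R -> X -> X -> Rbar) : Prop :=
  forall r x, 0 < r -> dr r x x = Finite 0.

Definition dr_upper_semicont {X : Type} (dr : R -> X -> X -> Rbar) : Prop :=
  (forall r1 r2 x y, 0 < r1 -> r1 <= r2 -> Rbar_le (dr r1 x y) (dr r2 x y)) /\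
  (forall r eps x y, 0 < r -> Rbar_lt (dr r x y) (Finite eps) ->
     exists delta, 0 < delta /\ Rbar_lt (dr (r + delta) x y) (Finite eps)).

Definition dr_weaker_triangle {X : Type} (dr : R -> X -> X -> Rbar) : Prop :=
  forall r1 r2 r3 x y z, 0 < r1 -> 0 < r2 -> 0 < r3 ->
    Rbar_lt (dr (r1 + r2 + r3) x y) (Finite r3) ->
    Rbar_lt (dr (r1 + r2 + r3) y z) (Finite r2) ->
    Rbar_le (dr r1 x z) (Rbar_plus (dr (r1 + r2 + r3) x y) (dr (r1 + r2 + r3) y z)).

Definition weaker_dr_axioms {X : Type} (dr : R -> X -> X -> Rbar) : Prop :=
  dr_nonneg dr /\ dr_self_distance dr /\ dr_upper_semicont dr /\ dr_weaker_triangle dr.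

Definition dr_nondegenerate {X : Type} (dr : R -> X -> X -> Rbar) : Prop :=
  forall x y, (forall r, 0 < r -> dr r x y = Finite 0) -> x = y.

Definition quniformity_dr {X : Type} (dr : R -> X -> X -> Rbar)
  (U : X * X -> Prop) : Prop :=
  exists r eps, 0 < r /\ 0 < eps /\
    forall x y, Rbar_lt (dr r x y) (Finite eps) -> U (x, y).

Definition quasi_pseudo_metric {X : Type} (d : X -> X -> R) : Prop :=
  (forall x y, 0 <= d x y) /\ (forall x, d x x = 0) /\
  (forall x y z, d x z <= d x y + d y z).

Definition quasi_metric {X : Type} (d : X -> X -> R) : Prop :=
  quasi_pseudo_metric d /\ (forall x y, d x y = 0 -> x = y).

Definition quniformity_d {X : Type} (d : X -> X -> R) (U : X * X -> Prop) : Prop :=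
  exists eps, 0 < eps /\ forall x y, d x y < eps -> U (x, y).

(* Main.v *)
Require Import Defs.
From Stdlib Require Import Reals.
From Coquelicot Require Import Rbar.
Open Scope R_scope.
From Stdlib Require Import Lra Lia List Classical.
From Coquelicot Require Import Lub.

Lemma pow_anti (q : R) (j k : nat) : 0 <= q <= 1 -> (j <= k)%nat -> q ^ k <= q ^ j.
Proof.
  intros Hq Hjk. induction Hjk.
  - lra.
  - simpl. assert (0 <= q ^ m) by (apply pow_le; lra). nra.
Qed.

Lemma pow_pos_le1 (q : R) (n : nat) : 0 < q <= 1 -> 0 < q ^ n <= 1.
Proof.
  intros Hq. split. apply pow_lt; lra.
  replace 1 with (q ^ 0) by reflexivity. apply pow_anti; [lra|lia].
Qed.

Lemma rbar_tri a b c p q : Rbar_le (Finite 0) a -> Rbar_le (Finite 0) b ->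
  Rbar_lt a (Finite p) -> Rbar_lt b (Finite q) -> Rbar_le c (Rbar_plus a b) ->
  Rbar_lt c (Finite (p + q)).
Proof.
  destruct a, b, c; simpl; intros; try lra; tauto.
Qed.

Section Chains.
Variable X : Type.
Variable U : nat -> X -> X -> Prop.

Fixpoint chainP (x : X) (l : list (nat * X)) : Prop :=
  match l with nil => True | (k, y) :: l' => U k x y /\ chainP y l' end.
Fixpoint endp (x : X) (l : list (nat * X)) : X :=
  match l with nil => x | (_, y) :: l' => endp y l' end.
Fixpoint wt (l : list (nat * X)) : R :=
  match l with nil => 0 | (k, _) :: l' => (/2) ^ k + wt l' end.

Lemma wt_nonneg l : 0 <= wt l.
Proof. induction l as [|[k y] l IH]; simpl. lra. assert (0 <= (/2)^k) by (apply pow_le; lra). lra. Qed.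

Lemma wt_app l1 l2 : wt (l1 ++ l2) = wt l1 + wt l2.
Proof. induction l1 as [|[k y] l IH]; simpl. lra. rewrite IH; lra. Qed.

Lemma chainP_app x l1 l2 : chainP x (l1 ++ l2) <-> chainP x l1 /\ chainP (endp x l1) l2.
Proof.
  revert x; induction l1 as [|[k y] l IH]; intros x; simpl. tauto.
  rewrite IH. tauto.
Qed.

Lemma endp_app x l1 l2 : endp x (l1 ++ l2) = endp (endp x l1) l2.
Proof. revert x; induction l1 as [|[k y] l IH]; intros x; simpl; auto. Qed.

Lemma split_lem l : l <> nil -> forall c1 c2, 0 <= c1 -> 0 <= c2 -> wt l <= c1 + c2 ->
  exists l1 a l2, l = l1 ++ a :: l2 /\ wt l1 <= c1 /\ wt l2 <= c2.
Proof.
  induction l as [|[k y] l IH]; intros Hne c1 c2 H1 H2 Hw. congruence.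
  destruct (Rle_dec (wt l) c2) as [Hl|Hl].
  - exists nil, (k, y), l. simpl. repeat split; auto; lra.
  - assert (l <> nil) by (intro E; subst; simpl in Hl; lra).
    simpl in Hw.
    destruct (IH H (c1 - (/2)^k) c2) as (l1 & a & l2 & E & Hw1 & Hw2); try lra.
    exists ((k, y) :: l1), a, l2. subst. simpl. repeat split; auto; lra.
Qed.

Hypothesis Urefl : forall n x, U n x x.
Hypothesis Umono : forall j k x y, (j <= k)%nat -> U k x y -> U j x y.
Hypothesis Ucomp : forall n x y z w, U (S n) x y -> U (S n) y z -> U (S n) z w -> U n x w.

Lemma chain_main m : forall l, (length l <= m)%nat -> forall n x, chainP x l ->
  wt l <= (/2) ^ (S n) -> U n x (endp x l).
Proof.
  induction m as [|m IH]; intros l Hlen n x Hc Hw.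
  - destruct l; simpl in Hlen; [simpl; apply Urefl | lia].
  - destruct l as [|p l0]. simpl; apply Urefl.
    assert (Hpos : 0 <= (/2) ^ (S (S n))) by (apply pow_le; lra).
    destruct (split_lem (p :: l0) ltac:(discriminate) ((/2)^(S (S n))) ((/2)^(S (S n))) Hpos Hpos)
      as (l1 & [k y] & l2 & E & Hw1 & Hw2).
    { simpl in Hw |- *. lra. }
    rewrite E in Hc, Hlen, Hw |- *.
    rewrite wt_app in Hw. simpl in Hw.
    rewrite length_app in Hlen. simpl in Hlen.
    apply chainP_app in Hc. destruct Hc as [Hc1 [Hk Hc2]].
    rewrite endp_app. simpl.
    apply Ucomp with (endp x l1) y.
    + apply IH; auto. lia.
    + apply Umono with k; auto.
      destruct (Compare_dec.le_lt_dec (S n) k) as [Hle|Hlt]; auto.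
      exfalso.
      assert ((/2)^n <= (/2)^k) by (apply pow_anti; [lra|lia]).
      assert (0 <= wt l1) by apply wt_nonneg.
      assert (0 <= wt l2) by apply wt_nonneg.
      assert (0 < (/2)^n) by (apply pow_lt; lra).
      simpl in Hw. lra.
    + apply IH; auto. lia.
Qed.

Definition Eset (x y : X) : R -> Prop :=
  fun t => exists l, chainP x l /\ endp x l = y /\ wt l = t.

Definition dch (x y : X) : R := real (Glb_Rbar (Eset x y)).

Hypothesis Uall : forall x y, U 0 x y.

Lemma Eset_fin x y : Glb_Rbar (Eset x y) = Finite (dch x y).
Proof.
  unfold dch. destruct (Glb_Rbar_correct (Eset x y)) as [lb glb].
  assert (H1 : Rbar_le (Glb_Rbar (Eset x y)) (Finite 1)).
  { apply lb. exists ((0%nat, y) :: nil). simpl. split; [split; auto|split; auto; lra]. }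
  assert (H0 : Rbar_le (Finite 0) (Glb_Rbar (Eset x y))).
  { apply glb. intros t [l [_ [_ Ht]]]. subst. simpl. apply wt_nonneg. }
  destruct (Glb_Rbar (Eset x y)); simpl in *; tauto.
Qed.

Lemma dch_nonneg x y : 0 <= dch x y.
Proof.
  destruct (Glb_Rbar_correct (Eset x y)) as [lb glb].
  assert (H0 : Rbar_le (Finite 0) (Glb_Rbar (Eset x y))).
  { apply glb. intros t [l [_ [_ Ht]]]. subst. simpl. apply wt_nonneg. }
  rewrite Eset_fin in H0. exact H0.
Qed.

Lemma dch_le x y l : chainP x l -> endp x l = y -> dch x y <= wt l.
Proof.
  intros Hc He. destruct (Glb_Rbar_correct (Eset x y)) as [lb glb].
  assert (H := lb (wt l) (ex_intro _ l (conj Hc (conj He eq_refl)))).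
  rewrite Eset_fin in H. exact H.
Qed.

Lemma dch_approx x y t : dch x y < t -> exists l, chainP x l /\ endp x l = y /\ wt l < t.
Proof.
  intros Ht. apply NNPP. intro Hn.
  destruct (Glb_Rbar_correct (Eset x y)) as [lb glb].
  assert (H : Rbar_le (Finite t) (Glb_Rbar (Eset x y))).
  { apply glb. intros s [l [Hc [He Hs]]]. subst. simpl.
    destruct (Rle_dec t (wt l)) as [h|h]; auto. exfalso; apply Hn. exists l. repeat split; auto; lra. }
  rewrite Eset_fin in H. simpl in H. lra.
Qed.

Lemma dch_qpm : quasi_pseudo_metric dch.
Proof.
  split; [|split].
  - apply dch_nonneg.
  - intros x. apply Rle_antisym; [|apply dch_nonneg].
    apply (dch_le x x nil); simpl; auto.
  - intros x y z. apply Rnot_lt_le. intro H.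
    set (e := (dch x z - dch x y - dch y z) / 2).
    destruct (dch_approx x y (dch x y + e)) as (l1 & Hc1 & He1 & Hw1). unfold e; lra.
    destruct (dch_approx y z (dch y z + e)) as (l2 & Hc2 & He2 & Hw2). unfold e; lra.
    assert (Hd := dch_le x z (l1 ++ l2)).
    rewrite chainP_app, endp_app, He1, wt_app in Hd.
    specialize (Hd (conj Hc1 Hc2) He2). unfold e in *; lra.
Qed.

End Chains.

Definition Ub {X : Type} (dr : R -> X -> X -> Rbar) (n : nat) (x y : X) : Prop :=
  match n with O => True | S _ => Rbar_lt (dr (2 * INR n) x y) (Finite ((/4) ^ n)) end.

Lemma Ub_props {X : Type} (dr : R -> X -> X -> Rbar) : weaker_dr_axioms dr ->
  (forall n x, Ub dr n x x) /\
  (forall j k x y, (j <= k)%nat -> Ub dr k x y -> Ub dr j x y) /\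
  (forall n x y z w, Ub dr (S n) x y -> Ub dr (S n) y z -> Ub dr (S n) z w -> Ub dr n x w).
Proof.
  intros [Hnn [Hself [[Hmono _] Htri]]].
  split; [|split].
  - intros [|n] x; [exact I|]. unfold Ub. rewrite Hself.
    exact (pow_lt (/4) (S n) ltac:(lra)).
    rewrite S_INR. assert (0 <= INR n) by apply pos_INR. lra.
  - intros [|j] [|k] x y Hjk H; [exact I|exact I|lia|].
    unfold Ub in H |- *.
    apply Rbar_le_lt_trans with (dr (2 * INR (S k)) x y).
    { apply Hmono. rewrite S_INR. assert (0 <= INR j) by apply pos_INR. lra.
      apply Rmult_le_compat_l. lra. apply le_INR. lia. }
    eapply Rbar_lt_le_trans. exact H.
    exact (pow_anti (/4) (S j) (S k) ltac:(lra) Hjk).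
  - intros [|n] x y z w H1 H2 H3; [exact I|].
    unfold Ub in H1, H2, H3 |- *.
    set (R' := 2 * INR (S (S n))) in *.
    set (e' := (/4) ^ (S (S n))) in *.
    assert (HR : R' = 2 * INR (S n) + 2) by (unfold R'; rewrite (S_INR (S n)); ring).
    assert (Hn0 : 0 <= INR n) by apply pos_INR.
    assert (HRn : 2 * INR (S n) >= 2) by (rewrite S_INR; lra).
    assert (He' : e' = /4 * (/4) ^ (S n)) by reflexivity.
    assert (Hb := pow_pos_le1 (/4) n ltac:(lra)).
    assert (He : (/4) ^ (S n) = /4 * (/4) ^ n) by reflexivity.
    assert (Hep : 0 < e' <= /16) by (rewrite He', He; lra).
    assert (T1 := Htri (R' - 2 * e') e' e' x y z ltac:(lra) ltac:(lra) ltac:(lra)).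
    replace (R' - 2 * e' + e' + e') with R' in T1 by ring.
    specialize (T1 H1 H2).
    assert (A1 : Rbar_lt (dr (R' - 2 * e') x z) (Finite (e' + e'))).
    { apply rbar_tri with (dr R' x y) (dr R' y z); auto; apply Hnn; lra. }
    assert (A2 : Rbar_lt (dr (R' - 2 * e') z w) (Finite e')).
    { apply Rbar_le_lt_trans with (dr R' z w); auto. apply Hmono; lra. }
    assert (T2 := Htri (R' - 5 * e') e' (e' + e') x z w ltac:(lra) ltac:(lra) ltac:(lra)).
    replace (R' - 5 * e' + e' + (e' + e')) with (R' - 2 * e') in T2 by ring.
    specialize (T2 A1 A2).
    assert (A3 : Rbar_lt (dr (R' - 5 * e') x w) (Finite (e' + e' + e'))).
    { apply rbar_tri with (dr (R' - 2 * e') x z) (dr (R' - 2 * e') z w); auto; apply Hnn; lra. }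
    apply Rbar_le_lt_trans with (dr (R' - 5 * e') x w).
    { apply Hmono; lra. }
    eapply Rbar_lt_le_trans. exact A3. simpl. lra.
Qed.

Lemma pow_small (q y : R) : 0 <= q < 1 -> 0 < y -> exists N, forall n, (n >= N)%nat -> q ^ n < y.
Proof.
  intros Hq Hy. destruct (pow_lt_1_zero q ltac:(rewrite Rabs_pos_eq; lra) y Hy) as [N HN].
  exists N. intros n Hn. specialize (HN n Hn). rewrite Rabs_pos_eq in HN; auto. apply pow_le; lra.
Qed.

Lemma main_d (X : Type) (dr : R -> X -> X -> Rbar) : weaker_dr_axioms dr ->
  exists d : X -> X -> R, quasi_pseudo_metric d /\
     (forall U : X * X -> Prop, quniformity_d d U <-> quniformity_dr dr U) /\
     (dr_nondegenerate dr -> forall x y, d x y = 0 -> x = y).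
Proof.
  intros Hax.
  destruct (Ub_props dr Hax) as [Hrefl [Hmon Hcomp]].
  assert (Hall : forall x y, Ub dr 0 x y) by (intros; exact I).
  pose proof Hax as [Hnn [Hself [[Hmono _] Htri]]].
  exists (dch X (Ub dr)). split; [|split].
  - apply dch_qpm; auto.
  - intros U. split.
    + intros [eps [Heps HU]].
      destruct (pow_small (/2) eps ltac:(lra) Heps) as [N HN].
      exists (2 * INR (S N)), ((/4) ^ (S N)). split; [|split].
      { rewrite S_INR. assert (0 <= INR N) by apply pos_INR. lra. }
      { apply pow_lt; lra. }
      intros x y Hxy. apply HU.
      assert (Hd := dch_le X (Ub dr) Hall x y ((S N, y) :: nil)).
      cbn [chainP endp wt] in Hd. specialize (Hd (conj Hxy I) eq_refl).
      specialize (HN (S N) ltac:(lia)). lra.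
    + intros [r [eps [Hr [Heps HU]]]].
      destruct (pow_small (/4) eps ltac:(lra) Heps) as [N1 HN1].
      destruct (INR_unbounded r) as [N2 HN2].
      set (n := S (Nat.max N1 N2)).
      exists ((/2) ^ (S n)). split. apply pow_lt; lra.
      intros x y Hd.
      destruct (dch_approx X (Ub dr) Hall x y _ Hd) as (l & Hc & He & Hw).
      assert (HU' := chain_main X (Ub dr) Hrefl Hmon Hcomp (length l) l (le_n _) n x Hc ltac:(lra)).
      rewrite He in HU'. unfold Ub, n in HU'. fold n in HU'.
      apply HU.
      apply Rbar_le_lt_trans with (dr (2 * INR n) x y).
      { apply Hmono; auto. assert (INR N2 <= INR n) by (apply le_INR; unfold n; lia).
        assert (0 <= INR N2) by apply pos_INR. lra. }
      eapply Rbar_lt_le_trans. exact HU'.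
      exact (Rlt_le _ _ (HN1 n ltac:(unfold n; lia))).
  - intros Hnd x y H0. apply Hnd. intros r Hr.
    destruct (INR_unbounded r) as [N2 HN2].
    assert (HUn : forall n, Ub dr n x y).
    { intros n. destruct (dch_approx X (Ub dr) Hall x y ((/2) ^ (S n))) as (l & Hc & He & Hw).
      rewrite H0. apply pow_lt; lra.
      rewrite <- He. apply (chain_main X (Ub dr) Hrefl Hmon Hcomp (length l) l (le_n _)); auto; lra. }
    assert (Hb : forall n, (n >= N2)%nat -> Rbar_lt (dr r x y) (Finite ((/4) ^ (S n)))).
    { intros n Hn. specialize (HUn (S n)). unfold Ub in HUn.
      apply Rbar_le_lt_trans with (dr (2 * INR (S n)) x y); auto.
      apply Hmono; auto. assert (INR N2 <= INR (S n)) by (apply le_INR; lia).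
      assert (0 <= INR N2) by apply pos_INR. lra. }
    assert (Hge := Hnn r x y Hr).
    specialize (Hb N2 (le_n _)) as Hb0.
    destruct (dr r x y) as [a| |] eqn:Ea; simpl in Hge, Hb0; try tauto.
    f_equal. destruct (Req_dec a 0) as [|Ha]; auto. exfalso.
    destruct (pow_small (/4) a ltac:(lra) ltac:(lra)) as [N1 HN1].
    specialize (Hb (S (Nat.max N1 N2)) ltac:(lia)). simpl in Hb.
    specialize (HN1 (S (S (Nat.max N1 N2))) ltac:(lia)). simpl in HN1. lra.
Qed.

Theorem theorem4p10 (X : Type) (dr : R -> X -> X -> Rbar) :
  weaker_dr_axioms dr ->
  (exists d : X -> X -> R, quasi_pseudo_metric d /\
     (forall U : X * X -> Prop, quniformity_d d U <-> quniformity_dr dr U)) /\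
  (dr_nondegenerate dr ->
   exists d : X -> X -> R, quasi_metric d /\
     (forall U : X * X -> Prop, quniformity_d d U <-> quniformity_dr dr U)).
Proof.
  intros Hax. destruct (main_d X dr Hax) as [d [Hq [Hu Hnd]]].
  split.
  - exists d; auto.
  - intros H. exists d. split; auto. split; auto.
Qed.
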